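(* Let $\Gamma\preceq_\exists\Gamma'$ be ordered abelian groups (in the language $\{0,+,<\}$) and $\gamma\in\Gamma$. Then: (i) if $\Delta^+$ (resp. $\Delta'^+$) is the minimal convex subgroup of $\Gamma$ (resp. $\Gamma'$) containing $\gamma$, then $\Gamma/\Delta^+$ is pure in $\Gamma'/\Delta'^+$, i.e., the quotient $(\Gamma'/\Delta'^+)/(\Gamma/\Delta^+)$ is torsion-free; (ii) if $\Gamma$ is $\aleph_1$-saturated and $\Delta$ (resp. $\Delta'$) is the maximal convex subgroup of $\Gamma$ (resp. $\Gamma'$) not containing $\gamma$, then $\Gamma/\Delta\preceq_\exists\Gamma'/\Delta'$.
   Context: $\preceq_\exists$ means existentially closed substructure. A structure is $\aleph_1$-saturated if every countable decreasing chain of non-empty definable sets (with parameters) has non-empty intersection. *)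

(* Defs.v *)
From Stdlib Require Import ClassicalEpsilon.
From mathcomp Require Import all_boot.

Set Implicit Arguments.
Unset Strict Implicit.
Unset Printing Implicit Defensive.

Record Lstruct := LStruct {
  car : Type;
  szero : car;
  sadd : car -> car -> car;
  slt : car -> car -> Prop }.
Arguments szero {_}.
Arguments sadd {_}.
Arguments slt {_}.

Inductive term := tvar (n : nat) | tzero | tadd (t1 t2 : term).

Inductive formula :=
  | fEq (t1 t2 : term)
  | fLt (t1 t2 : term)
  | fNot (p : formula)
  | fAnd (p q : formula)
  | fEx (i : nat) (p : formula).

Fixpoint teval (M : Lstruct) (rho : nat -> car M) (t : term) : car M :=
  match t with
  | tvar n => rho n
  | tzero => szero
  | tadd t1 t2 => sadd (teval rho t1) (teval rho t2)
  end.

Definition upd (M : Lstruct) (rho : nat -> car M) (i : nat) (a : car M) : nat -> car M :=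
  fun j => if j == i then a else rho j.

Fixpoint sat (M : Lstruct) (rho : nat -> car M) (p : formula) : Prop :=
  match p with
  | fEq t1 t2 => teval rho t1 = teval rho t2
  | fLt t1 t2 => slt (teval rho t1) (teval rho t2)
  | fNot q => ~ sat rho q
  | fAnd q r => sat rho q /\ sat rho r
  | fEx i q => exists a : car M, sat (upd rho i a) q
  end.

Fixpoint qf (p : formula) : bool :=
  match p with
  | fEq _ _ | fLt _ _ => true
  | fNot q => qf q
  | fAnd q r => qf q && qf r
  | fEx _ _ => false
  end.

Definition OAG (M : Lstruct) : Prop :=
  (forall x y z : car M, sadd x (sadd y z) = sadd (sadd x y) z) /\
  (forall x y : car M, sadd x y = sadd y x) /\
  (forall x : car M, sadd szero x = x) /\
  (forall x : car M, exists y, sadd x y = szero) /\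
  (forall x : car M, ~ slt x x) /\
  (forall x y z : car M, slt x y -> slt y z -> slt x z) /\
  (forall x y : car M, slt x y \/ x = y \/ slt y x) /\
  (forall x y z : car M, slt x y -> slt (sadd x z) (sadd y z)).

Fixpoint smul (M : Lstruct) (n : nat) (x : car M) : car M :=
  match n with
  | 0 => szero
  | S k => sadd x (smul k x)
  end.

Definition embedding (M N : Lstruct) (f : car M -> car N) : Prop :=
  injective f /\ f szero = szero /\
  (forall x y, f (sadd x y) = sadd (f x) (f y)) /\
  (forall x y, slt x y <-> slt (f x) (f y)).

(* Existential formulas are represented as  ∃ x_0 ... x_{k-1}, phi  with phi
   quantifier-free; the remaining variables (index >= k) carry parameters. *)
Definition ec_embedding (M N : Lstruct) (f : car M -> car N) : Prop :=
  embedding f /\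
  forall (phi : formula) (k : nat) (rho : nat -> car M),
    qf phi ->
    (exists sigma : nat -> car N,
        (forall i, k <= i -> sigma i = f (rho i)) /\ sat sigma phi) ->
    exists tau : nat -> car M,
        (forall i, k <= i -> tau i = rho i) /\ sat tau phi.

Definition convex_subgroup (M : Lstruct) (D : car M -> Prop) : Prop :=
  D szero /\
  (forall x y, D x -> D y -> D (sadd x y)) /\
  (forall x y, D x -> sadd x y = szero -> D y) /\
  (forall a x b, D a -> D b -> slt a x -> slt x b -> D x).

Definition min_convex_containing (M : Lstruct) (g : car M) (D : car M -> Prop) : Prop :=
  convex_subgroup D /\ D g /\
  forall E : car M -> Prop, convex_subgroup E -> E g ->
    (forall x, E x -> D x) -> forall x, D x -> E x.

Definition max_convex_not_containing (M : Lstruct) (g : car M) (D : car M -> Prop) : Prop :=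
  convex_subgroup D /\ ~ D g /\
  forall E : car M -> Prop, convex_subgroup E -> ~ E g ->
    (forall x, D x -> E x) -> forall x, E x -> D x.

Definition coset (M : Lstruct) (D : car M -> Prop) (g : car M) : car M -> Prop :=
  fun x => exists d, D d /\ x = sadd g d.

Definition qcar (M : Lstruct) (D : car M -> Prop) : Type :=
  {C : car M -> Prop | exists g, C = coset D g}.

Definition rep (M : Lstruct) (D : car M -> Prop) (C : qcar D) : car M :=
  proj1_sig (constructive_indefinite_description _ (proj2_sig C)).

Definition cls (M : Lstruct) (D : car M -> Prop) (g : car M) : qcar D :=
  exist _ (coset D g) (ex_intro _ g erefl).

(* a + D < b + D  iff  a < b and a + D <> b + D  (well defined for convex D) *)
Definition quot (M : Lstruct) (D : car M -> Prop) : Lstruct :=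
  @LStruct (qcar D) (cls D szero)
    (fun C1 C2 => cls D (sadd (rep C1) (rep C2)))
    (fun C1 C2 => slt (rep C1) (rep C2) /\ C1 <> C2).

Definition extend (M : Lstruct) (n : nat) (a : 'I_n -> car M) (rho : nat -> car M) :
  nat -> car M :=
  fun i => if @insub _ (fun i => i < n) 'I_n i is Some j then a j else rho i.

Definition definable (M : Lstruct) (n : nat) (X : ('I_n -> car M) -> Prop) : Prop :=
  exists (phi : formula) (rho : nat -> car M),
    forall a, X a <-> sat (extend a rho) phi.

Definition aleph1_saturated (M : Lstruct) : Prop :=
  forall (n : nat) (X : nat -> ('I_n -> car M) -> Prop),
    (forall k, definable (X k)) ->
    (forall k a, X k.+1 a -> X k a) ->
    (forall k, exists a, X k a) ->
    exists a, forall k, X k a.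

(* Main.v *)
Require Import Defs.
From mathcomp Require Import all_boot.
From Stdlib Require Import ClassicalEpsilon ProofIrrelevance FunctionalExtensionality PropExtensionality.

Set Implicit Arguments.
Unset Strict Implicit.
Unset Printing Implicit Defensive.

Notation "x |+| y" := (sadd x y) (at level 50, left associativity).
Notation "x <<< y" := (slt x y) (at level 70).
Definition sle (M : Lstruct) (x y : car M) := ~ slt y x.
Notation "x <<= y" := (sle x y) (at level 70).

Lemma sig_eq (A : Type) (P : A -> Prop) (a b : {x : A | P x}) :
  proj1_sig a = proj1_sig b -> a = b.
Proof.
case: a b => [a pa] [b pb] /= E; subst b; f_equal; apply: proof_irrelevance.
Qed.

Section OAGTh.
Variable M : Lstruct.
Hypothesis HM : OAG M.
Implicit Types x y z u v w : car M.

Lemma addA x y z : x |+| (y |+| z) = x |+| y |+| z.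
Proof. by case: HM => A _; apply: A. Qed.
Lemma addC x y : x |+| y = y |+| x.
Proof. by case: HM => _ [C _]; apply: C. Qed.
Lemma add0 x : szero |+| x = x.
Proof. by case: HM => _ [_ [Z _]]; apply: Z. Qed.
Lemma addx0 x : x |+| szero = x.
Proof. by rewrite addC add0. Qed.
Lemma inv_ex x : exists y, x |+| y = szero.
Proof. by case: HM => _ [_ [_ [I _]]]; apply: I. Qed.
Lemma ltirr x : ~ x <<< x.
Proof. by case: HM => _ [_ [_ [_ [IR _]]]]; apply: IR. Qed.
Lemma lt_trans x y z : x <<< y -> y <<< z -> x <<< z.
Proof. by case: HM => _ [_ [_ [_ [_ [T _]]]]]; apply: T. Qed.
Lemma trich x y : x <<< y \/ x = y \/ y <<< x.
Proof. by case: HM => _ [_ [_ [_ [_ [_ [TR _]]]]]]; apply: TR. Qed.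
Lemma ltD x y z : x <<< y -> x |+| z <<< y |+| z.
Proof. by case: HM => _ [_ [_ [_ [_ [_ [_ O]]]]]]; apply: O. Qed.

Definition opp x : car M := proj1_sig (constructive_indefinite_description _ (inv_ex x)).
Lemma addN x : x |+| opp x = szero.
Proof. exact: (proj2_sig (constructive_indefinite_description _ (inv_ex x))). Qed.
Lemma addNx x : opp x |+| x = szero.
Proof. by rewrite addC addN. Qed.
Lemma addCA x y z : x |+| (y |+| z) = y |+| (x |+| z).
Proof. by rewrite addA (addC x y) -addA. Qed.
Lemma addAC x y z : x |+| y |+| z = x |+| z |+| y.
Proof. by rewrite -addA (addC y z) addA. Qed.
Lemma addK x y : x |+| y |+| opp y = x.
Proof. by rewrite -addA addN addx0. Qed.
Lemma addNK x y : x |+| opp y |+| y = x.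
Proof. by rewrite -addA addNx addx0. Qed.
Lemma add_inj x y z : x |+| z = y |+| z -> x = y.
Proof. by move=> H; rewrite -(addK x z) H addK. Qed.
Lemma add_injl x y z : z |+| x = z |+| y -> x = y.
Proof. by rewrite (addC z x) (addC z y); apply: add_inj. Qed.
Lemma opp_uniq x y : x |+| y = szero -> y = opp x.
Proof. by move=> H; apply: (@add_injl _ _ x); rewrite H addN. Qed.
Lemma oppK x : opp (opp x) = x.
Proof. by symmetry; apply: opp_uniq; rewrite addNx. Qed.
Lemma opp0 : opp szero = szero :> car M.
Proof. by symmetry; apply: opp_uniq; rewrite addx0. Qed.
Lemma oppD x y : opp (x |+| y) = opp x |+| opp y.
Proof.
symmetry; apply: opp_uniq.
by rewrite addA (addAC x y) addN add0 addN.
Qed.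

Lemma ltDl x y z : x <<< y -> z |+| x <<< z |+| y.
Proof. by rewrite (addC z x) (addC z y); apply: ltD. Qed.
Lemma ltDr_iff x y z : x |+| z <<< y |+| z <-> x <<< y.
Proof.
split; last exact: ltD.
by move=> /(ltD (opp z)); rewrite !addK.
Qed.
Lemma ltDl_iff x y z : z |+| x <<< z |+| y <-> x <<< y.
Proof. by rewrite (addC z x) (addC z y) ltDr_iff. Qed.
Lemma lt_add2 x y z w : x <<< y -> z <<< w -> x |+| z <<< y |+| w.
Proof. move=> H1 H2; apply: (lt_trans (ltD z H1)); exact: ltDl. Qed.
Lemma lt_asym x y : x <<< y -> ~ y <<< x.
Proof. by move=> H1 H2; apply: (ltirr (lt_trans H1 H2)). Qed.
Lemma lt_neq x y : x <<< y -> x <> y.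
Proof. by move=> H E; subst; apply: (ltirr H). Qed.

Lemma leP x y : x <<= y <-> x <<< y \/ x = y.
Proof.
split.
  by move=> H; case: (trich x y) => [|[|]]; auto; move=> /H.
by case=> [H|->]; [exact: lt_asym|exact: ltirr].
Qed.
Lemma le_refl x : x <<= x.
Proof. exact: ltirr. Qed.
Lemma ltW x y : x <<< y -> x <<= y.
Proof. exact: lt_asym. Qed.
Lemma lt_le_trans x y z : x <<< y -> y <<= z -> x <<< z.
Proof. by move=> H /leP [H'|<-] //; exact: lt_trans H H'. Qed.
Lemma le_lt_trans x y z : x <<= y -> y <<< z -> x <<< z.
Proof. by move=> /leP [H'|->] H //; exact: lt_trans H' H. Qed.
Lemma le_trans x y z : x <<= y -> y <<= z -> x <<= z.
Proof. move=> /leP [H|->] // H'; apply: ltW; exact: lt_le_trans H H'. Qed.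
Lemma leDr_iff x y z : x |+| z <<= y |+| z <-> x <<= y.
Proof. by rewrite /sle ltDr_iff. Qed.
Lemma leDl_iff x y z : z |+| x <<= z |+| y <-> x <<= y.
Proof. by rewrite /sle ltDl_iff. Qed.
Lemma leD x y z : x <<= y -> x |+| z <<= y |+| z.
Proof. by rewrite leDr_iff. Qed.
Lemma le_add2 x y z w : x <<= y -> z <<= w -> x |+| z <<= y |+| w.
Proof.
move=> H1 H2; have H3 : y |+| z <<= y |+| w.
  by rewrite (addC y z) (addC y w); apply: leD.
exact: (le_trans (leD (z:=z) H1) H3).
Qed.
Lemma lt_le_add x y z w : x <<< y -> z <<= w -> x |+| z <<< y |+| w.
Proof.
move=> H1 H2; apply: (lt_le_trans (ltD z H1)).
by rewrite (addC y z) (addC y w); apply: leD.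
Qed.
Lemma ltNge x y : x <<< y <-> ~ y <<= x.
Proof.
split; first by move=> H H'; apply: H'.
by move=> H; case: (trich x y) => [|[E|H']] //; exfalso; apply: H; [rewrite E; apply: le_refl| apply: ltW].
Qed.
Lemma lt_sub x y : x <<< y <-> szero <<< y |+| opp x.
Proof. by rewrite -(ltDr_iff _ _ (opp x)) addN. Qed.
Lemma le_sub x y : x <<= y <-> szero <<= y |+| opp x.
Proof. by rewrite -(leDr_iff _ _ (opp x)) addN. Qed.
Lemma lt_opp x y : x <<< y <-> opp y <<< opp x.
Proof.
rewrite -(ltDr_iff _ _ (opp x |+| opp y)).
by rewrite addA addN add0 addCA addN addx0.
Qed.
Lemma le_opp x y : x <<= y <-> opp y <<= opp x.
Proof. by rewrite /sle lt_opp. Qed.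
Lemma opp_pos x : szero <<< x <-> opp x <<< szero.
Proof. by rewrite lt_opp opp0. Qed.

Lemma smulS n x : smul n.+1 x = x |+| smul n x.
Proof. by []. Qed.
Lemma smulD n m x : smul (n + m) x = smul n x |+| smul m x.
Proof. elim: n => [|n IH] /=; first by rewrite add0. by rewrite IH addA. Qed.
Lemma smul0 n : smul n szero = szero :> car M.
Proof. elim: n => [|n IH] //=; by rewrite IH add0. Qed.
Lemma smul_add n x y : smul n (x |+| y) = smul n x |+| smul n y.
Proof.
elim: n => [|n IH] /=; first by rewrite add0.
by rewrite IH !addA (addAC x y).
Qed.
Lemma smul_opp n x : smul n (opp x) = opp (smul n x).
Proof. apply: opp_uniq; by rewrite -smul_add addN smul0. Qed.
Lemma smul_le n x y : x <<= y -> smul n x <<= smul n y.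
Proof. move=> H; elim: n => [|n IH] /=; [exact: le_refl | exact: le_add2]. Qed.
Lemma smul_lt n x y : 0 < n -> x <<< y -> smul n x <<< smul n y.
Proof.
case: n => // n _ H /=; apply: lt_le_add => //; exact: smul_le (ltW H).
Qed.
Lemma smul_nonneg n x : szero <<= x -> szero <<= smul n x.
Proof. by move=> H; rewrite -(smul0 n); apply: smul_le. Qed.
Lemma smul_mono n m x : szero <<= x -> n <= m -> smul n x <<= smul m x.
Proof.
move=> H /subnKC <-; rewrite smulD -{1}(addx0 (smul n x)).
by rewrite leDl_iff; apply: smul_nonneg.
Qed.
Lemma smul_ge n x : 0 < n -> szero <<= x -> x <<= smul n x.
Proof. move=> Hn H; have := smul_mono H Hn; by rewrite /= addx0. Qed.
Lemma smul_le0 n x : 0 < n -> x <<= szero -> smul n x <<= x.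
Proof.
move=> Hn; rewrite le_opp opp0 => H; rewrite le_opp -smul_opp.
exact: smul_ge.
Qed.
Lemma smul_nonpos n x : x <<= szero -> smul n x <<= szero.
Proof. by move=> H; rewrite -(smul0 n); apply: smul_le. Qed.


Section Quot.
Variable D : car M -> Prop.
Hypothesis HD : convex_subgroup D.
Implicit Types a b d e : car M.

Lemma D0 : D szero.
Proof. by case: HD. Qed.
Lemma DD x y : D x -> D y -> D (x |+| y).
Proof. by case: HD => _ [H _]; apply: H. Qed.
Lemma DN x : D x -> D (opp x).
Proof. by case: HD => _ [_ [H _]] Hx; apply: (H x) => //; apply: addN. Qed.
Lemma Dconv a x b : D a -> D b -> a <<< x -> x <<< b -> D x.
Proof. by case: HD => _ [_ [_ H]]; apply: H. Qed.
Lemma Dconv_le a x b : D a -> D b -> a <<= x -> x <<= b -> D x.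
Proof.
move=> Ha Hb /leP [H1|<-] // /leP [H2|->] //.
exact: Dconv Ha Hb H1 H2.
Qed.
Lemma Dsmul n x : D x -> D (smul n x).
Proof. move=> H; elim: n => [|n IH] /=; [exact: D0| exact: DD]. Qed.
Lemma DB x y : D x -> D y -> D (x |+| opp y).
Proof. by move=> Hx Hy; apply: DD => //; apply: DN. Qed.

Lemma coset_self u : coset D u u.
Proof. exists szero; split; [exact: D0| by rewrite addx0]. Qed.

Lemma cls_eq u v : cls D u = cls D v <-> exists d, D d /\ v = u |+| d.
Proof.
split.
  move=> /(f_equal (@proj1_sig _ _)) /= E.
  have : coset D v v by apply: coset_self.
  by rewrite -E.
case=> d [Hd Ev]; apply: sig_eq => /=.
apply: functional_extensionality => x; apply: propositional_extensionality.
split.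
  case=> d' [Hd' ->]; exists (opp d |+| d'); split; first by apply: DD => //; apply: DN.
  by rewrite Ev -addA (addA d) addN add0.
case=> d' [Hd' ->]; exists (d |+| d'); split; first exact: DD.
by rewrite Ev addA.
Qed.

Lemma cls_eqN u v : cls D u = cls D v <-> D (v |+| opp u).
Proof.
rewrite cls_eq; split.
  by case=> d [Hd ->]; rewrite addC addA addNx add0.
move=> H; exists (v |+| opp u); split => //.
by rewrite addCA addN addx0.
Qed.

Lemma cls_rep (C : qcar D) : cls D (rep C) = C.
Proof.
apply: sig_eq => /=; rewrite /rep.
by case: (constructive_indefinite_description _ _) => g /= ->.
Qed.

Lemma cls_surj (C : qcar D) : exists a, C = cls D a.
Proof. by exists (rep C); rewrite cls_rep. Qed.

Lemma rep_cls a : exists d, D d /\ a = rep (cls D a) |+| d.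
Proof. by apply/cls_eq; rewrite cls_rep. Qed.

Lemma cls_add a d : D d -> cls D (a |+| d) = cls D a.
Proof. by move=> Hd; apply/cls_eq; exists (opp d); split; [exact: DN | rewrite addK]. Qed.

Lemma qadd a b : @sadd (quot D) (cls D a) (cls D b) = cls D (a |+| b).
Proof.
rewrite /=.
have [d1 [H1 E1]] := rep_cls a; have [d2 [H2 E2]] := rep_cls b.
move: (rep (cls D a)) (rep (cls D b)) E1 E2 => ra rb -> ->.
by rewrite addA (addAC ra d1) -addA (cls_add _ (DD H1 H2)).
Qed.

Lemma qsmul n a : @smul (quot D) n (cls D a) = cls D (smul n a).
Proof.
elim: n => [|n IH] //.
change (@sadd (quot D) (cls D a) (@smul (quot D) n (cls D a)) = cls D (smul n.+1 a)).
by rewrite IH qadd.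
Qed.

Lemma cmp x y e : D e -> cls D x <> cls D y -> (x |+| e <<< y <-> x <<< y).
Proof.
move=> He Hne; split.
  move=> H; apply/ltNge => Hyx; apply: Hne; apply/cls_eqN.
  apply: (Dconv_le He D0).
    apply: ltW => //; move: H; rewrite -(ltDr_iff _ _ (opp x)).
    by rewrite (addAC x) addN add0.
  by rewrite -(leDr_iff _ _ x) addNK add0.
move=> H; apply/ltNge => Hyx; apply: Hne; apply/cls_eqN.
apply: (Dconv_le D0 He).
  by apply: ltW => //; rewrite -lt_sub.
by rewrite -(leDr_iff _ _ x) addNK addC.
Qed.

Lemma shift x y d1 d2 : D d1 -> D d2 -> cls D x <> cls D y ->
  (x |+| d1 <<< y |+| d2 <-> x <<< y).
Proof.
move=> H1 H2 Hne.
rewrite -(ltDr_iff _ _ (opp d2)) addK -addA.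
by apply: cmp => //; apply: DB.
Qed.

Lemma qlt a b : @slt (quot D) (cls D a) (cls D b) <-> a <<< b /\ cls D a <> cls D b.
Proof.
rewrite /=.
have [d1 [H1 E1]] := rep_cls a; have [d2 [H2 E2]] := rep_cls b.
move: (rep (cls D a)) (rep (cls D b)) E1 E2 => ra rb -> ->.
rewrite !(cls_add _ H1) !(cls_add _ H2).
split; case=> H Hne; split => //; move: H; by rewrite (shift H1 H2 Hne).
Qed.

End Quot.
Implicit Types a b c d g : car M.

Lemma addACA a b c d : a |+| b |+| (c |+| d) = a |+| c |+| (b |+| d).
Proof. by rewrite -!addA (addCA b). Qed.
Lemma half a b : a |+| a <<< b |+| b -> a <<< b.
Proof.
move=> H; apply/ltNge => H'; have := le_add2 H' H'.
by move=> /(_ H).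
Qed.
Lemma lt_addpos a g : szero <<< g -> a <<< a |+| g.
Proof. by move=> H; rewrite -{1}(addx0 a) ltDl_iff. Qed.
Lemma le_addpos a g : szero <<= g -> a <<= a |+| g.
Proof. by move=> H; rewrite -{1}(addx0 a) leDl_iff. Qed.
Lemma sub_lt_iff a b c : a |+| opp b <<< c <-> a <<< b |+| c.
Proof. by rewrite -(ltDr_iff _ _ b) addNK addC. Qed.
Lemma sub_le_iff a b c : a |+| opp b <<= c <-> a <<= b |+| c.
Proof. by rewrite -(leDr_iff _ _ b) addNK addC. Qed.
Lemma lt_sub_add a b c : szero <<< a |+| opp b |+| c <-> b <<< a |+| c.
Proof. by rewrite -(ltDr_iff _ _ b) add0 addAC addNK. Qed.
Lemma le_sub_add a b c : szero <<= a |+| opp b |+| c <-> b <<= a |+| c.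
Proof. by rewrite -(leDr_iff _ _ b) add0 addAC addNK. Qed.

Definition Echar (g0 : car M) x := forall N, smul N x <<< g0 /\ szero <<< smul N x |+| g0.
Definition Fchar (g0 : car M) x := exists N, x <<= smul N g0 /\ szero <<= x |+| smul N g0.

Lemma gamma_D (D : car M -> Prop) g g0 : convex_subgroup D -> (g0 = g \/ g |+| g0 = szero) ->
  D g0 -> D g.
Proof.
move=> HD [->|E] // H; have -> : g = opp g0 by apply: opp_uniq; rewrite addC.
exact: DN.
Qed.

Lemma max_char g g0 (D : car M -> Prop) : (g0 = g \/ g |+| g0 = szero) -> szero <<< g0 ->
  max_convex_not_containing g D -> forall x, D x <-> Echar g0 x.
Proof.
move=> Hg Hpos [HD [Hng Hmax]].
have sub : forall x, D x -> Echar g0 x.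
  move=> x Hx N; split.
    apply/ltNge => H; apply: Hng; apply: (gamma_D HD Hg).
    exact: (Dconv_le HD (D0 HD) (Dsmul HD N Hx) (ltW Hpos) H).
  apply/ltNge => H; apply: Hng; apply: (gamma_D HD Hg).
  apply: (Dconv_le HD (D0 HD) (DN HD (Dsmul HD N Hx)) (ltW Hpos)).
  by rewrite -(leDr_iff _ _ (smul N x)) addNx addC.
have cE : convex_subgroup (Echar g0).
  split; [|split; [|split]].
  - by move=> N; rewrite smul0 add0; split.
  - move=> x y Hx Hy N; have [Hx1 Hx2] := Hx (N + N); have [Hy1 Hy2] := Hy (N + N).
    rewrite smulD in Hx1 Hx2; rewrite smulD in Hy1 Hy2; rewrite smul_add; split.
      apply: half; have := lt_add2 Hx1 Hy1; by rewrite addACA.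
    apply: half; have := lt_add2 Hx2 Hy2.
    by rewrite addACA (addACA (smul N x)) -addACA.
  - move=> x y Hx Exy N; have -> : y = opp x by apply: opp_uniq.
    have [H1 H2] := Hx N; rewrite smul_opp; split.
      by rewrite -(ltDr_iff _ _ (smul N x)) addNx addC.
    by rewrite -(ltDr_iff _ _ (smul N x)) add0 addAC addNx add0.
  - move=> a x b Ha Hb Hax Hxb N; have [Ha1 Ha2] := Ha N; have [Hb1 Hb2] := Hb N.
    have L1 := smul_le (n:=N) (ltW Hax); have L2 := smul_le (n:=N) (ltW Hxb).
    split; first exact: le_lt_trans L2 Hb1.
    apply: (lt_le_trans Ha2); exact: leD.
have nE : ~ Echar g0 g.
  move=> H; have [H1 H2] := H 1; case: Hg => E.
    by move: H1; rewrite /= addx0 E; apply: ltirr.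
  by move: H2; rewrite /= addx0 E; apply: ltirr.
move=> x; split; first exact: sub.
exact: (Hmax _ cE nE sub).
Qed.

Lemma min_char g g0 (D : car M -> Prop) : (g0 = g \/ g |+| g0 = szero) -> szero <<= g0 ->
  min_convex_containing g D -> forall x, D x <-> Fchar g0 x.
Proof.
move=> Hg Hpos [HD [Hgg Hmin]].
have sub : forall (E : car M -> Prop), convex_subgroup E -> E g -> forall x, Fchar g0 x -> E x.
  move=> E HE Eg x [N [H1 H2]].
  have Eg0 : E g0.
    case: Hg => [->//|H]; have -> : g0 = opp g by apply: opp_uniq.
    exact: DN.
  apply: (Dconv_le HE (DN HE (Dsmul HE N Eg0)) (Dsmul HE N Eg0)) => //.
  by rewrite -(leDr_iff _ _ (smul N g0)) addNx.
have cF : convex_subgroup (Fchar g0).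
  split; [|split; [|split]].
  - exists 0; rewrite /= addx0; split; exact: le_refl.
  - move=> x y [N [Hx1 Hx2]] [K [Hy1 Hy2]]; exists (N + K); rewrite smulD; split.
      exact: le_add2.
    rewrite addACA -(addx0 szero); exact: le_add2.
  - move=> x y [N [H1 H2]] Exy; have -> : y = opp x by apply: opp_uniq.
    exists N; split.
      by rewrite -(leDr_iff _ _ x) addNx addC.
    by rewrite -(leDr_iff _ _ x) add0 addAC addNx add0.
  - move=> a x b [N [Ha1 Ha2]] [K [Hb1 Hb2]] Hax Hxb; exists (N + K); split.
      apply: (le_trans (ltW Hxb)); apply: (le_trans Hb1).
      by apply: smul_mono => //; rewrite leq_addl.
    apply: (le_trans Ha2); apply: le_add2; first exact: ltW.
    by apply: smul_mono => //; rewrite leq_addr.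
have Fg : Fchar g0 g.
  exists 1; rewrite /= addx0; case: Hg => [E|E]; [subst g0|]; split.
  - exact: le_refl.
  - rewrite -(addx0 szero); exact: le_add2.
  - have -> : g = opp g0 by apply: opp_uniq; rewrite addC.
    apply: (le_trans (y := szero)) => //; by rewrite le_opp oppK opp0.
  - by rewrite E; apply: le_refl.
have sD := sub D HD Hgg.
move=> x; split; last exact: sD.
move=> Hx; exact: (Hmin _ cF Fg sD x Hx).
Qed.

Lemma F_pure g0 n w : szero <<= g0 -> 0 < n -> Fchar g0 (smul n w) -> Fchar g0 w.
Proof.
move=> Hg Hn [N [H1 H2]]; exists N.
have HN := smul_nonneg (n:=N) Hg.
case: (trich w szero) => [Hw|[->|Hw]].
- split; first exact: le_trans (ltW Hw) HN.
  apply: (le_trans H2); apply: leD; apply: smul_le0 => //; exact: ltW.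
- rewrite add0; split => //; exact: le_refl.
- split; first exact: le_trans (smul_ge Hn (ltW Hw)) H1.
  rewrite -(addx0 szero); apply: le_add2 => //; exact: ltW.
Qed.

Lemma Frel g0 u v : Fchar g0 (v |+| opp u) <->
  exists N, v <<= u |+| smul N g0 /\ u <<= v |+| smul N g0.
Proof.
split; case=> N [H1 H2]; exists N; move: H1 H2.
  by rewrite sub_le_iff le_sub_add.
by rewrite sub_le_iff le_sub_add.
Qed.

Definition Lrel (g0 : car M) u v := forall N, smul N u <<< smul N v |+| g0.

Section Q2.
Variable D : car M -> Prop.
Variable g0 : car M.
Hypothesis Hpos : szero <<< g0.
Hypothesis HDc : forall x, D x <-> Echar g0 x.
Hypothesis HD : convex_subgroup D.

Lemma Q1 u v : cls D u = cls D v <-> Lrel g0 u v /\ Lrel g0 v u.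
Proof.
rewrite cls_eqN // HDc /Echar; split.
  move=> H; split=> N; have [H1 H2] := H N; move: H1 H2; rewrite smul_add smul_opp.
    by rewrite lt_sub_add.
  by rewrite sub_lt_iff.
case=> H1 H2 N; rewrite smul_add smul_opp sub_lt_iff lt_sub_add; split; [exact: H2|exact: H1].
Qed.

Lemma Q2 u v : @slt (quot D) (cls D u) (cls D v) <-> ~ Lrel g0 v u.
Proof.
rewrite qlt // Q1; split.
  case=> Huv Hne H; apply: Hne; split => // N.
  apply: le_lt_trans (smul_le (n:=N) (ltW Huv)) _; exact: lt_addpos.
move=> H; split.
  apply/ltNge => Hvu; apply: H => N.
  apply: le_lt_trans (smul_le (n:=N) Hvu) _; exact: lt_addpos.
by case.
Qed.
End Q2.

End OAGTh.

From Stdlib Require List.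

Lemma Lrel_mono (M : Lstruct) (HM : OAG M) (g : car M) (u v : car M) N :
  szero <<< g -> smul N.+1 u <<< smul N.+1 v |+| g -> smul N u <<< smul N v |+| g.
Proof.
move=> Hg H; case: (trich HM u v) => [Huv|[Euv|Hvu]].
- apply: (le_lt_trans HM (smul_le HM (n:=N) (ltW HM Huv))); exact: lt_addpos.
- subst; exact: lt_addpos.
- rewrite -(@ltDl_iff M HM _ _ u); apply: (lt_trans HM H).
  rewrite /= -(addA HM); exact: (ltD HM (smul N v |+| g) Hvu).
Qed.

Fixpoint tmax (t : term) : nat :=
  match t with tvar n => n.+1 | tzero => 0 | tadd a b => maxn (tmax a) (tmax b) end.

Fixpoint tmul (n : nat) (t : term) : term :=
  match n with 0 => tzero | k.+1 => tadd t (tmul k t) end.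

Lemma teval_ext (M : Lstruct) (r1 r2 : nat -> car M) t :
  (forall i, i < tmax t -> r1 i = r2 i) -> teval r1 t = teval r2 t.
Proof.
elim: t => [n|//|a IHa b IHb] /= H; first by apply: H.
rewrite IHa ?IHb // => i Hi; apply: H; by rewrite leq_max Hi ?orbT.
Qed.

Lemma teval_tmul (M : Lstruct) (r : nat -> car M) n t : teval r (tmul n t) = smul n (teval r t).
Proof. by elim: n => [|n IH] //=; rewrite IH. Qed.

Lemma qteval (M : Lstruct) (HM : OAG M) (D : car M -> Prop) (HD : convex_subgroup D)
  (r : nat -> car (quot D)) (r0 : nat -> car M) t :
  (forall i, i < tmax t -> r i = cls D (r0 i)) -> teval r t = cls D (teval r0 t).
Proof.
elim: t => [n|//|a IHa b IHb] H; first by apply: H.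
change (@sadd (quot D) (teval r a) (teval r b) = cls D (teval r0 a |+| teval r0 b)).
rewrite IHa ?IHb ?(qadd HM HD) // => i Hi; apply: H; by rewrite /= leq_max Hi ?orbT.
Qed.

Fixpoint pairs (p : formula) : list (term * term) :=
  match p with
  | fEq t1 t2 => [:: (t1, t2); (t2, t1)]
  | fLt t1 t2 => [:: (t1, t2); (t2, t1)]
  | fNot q => pairs q
  | fAnd q r => pairs q ++ pairs r
  | fEx _ q => pairs q
  end.

Fixpoint fmax (p : formula) : nat :=
  match p with
  | fEq t1 t2 => maxn (tmax t1) (tmax t2)
  | fLt t1 t2 => maxn (tmax t1) (tmax t2)
  | fNot q => fmax q
  | fAnd q r => maxn (fmax q) (fmax r)
  | fEx _ q => fmax q
  end.

Lemma pairs_sym p t1 t2 : List.In (t1, t2) (pairs p) -> List.In (t2, t1) (pairs p).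
Proof.
elim: p => [a b|a b|q IH|q IHq r IHr|_ q IH] //=.
- by case=> [[-> ->]|[[-> ->]|[]]]; auto.
- by case=> [[-> ->]|[[-> ->]|[]]]; auto.
- move=> Hin; case: (List.in_app_or _ _ _ Hin) => H; apply: List.in_or_app; auto.
Qed.

Lemma pairs_bound p t1 t2 : List.In (t1, t2) (pairs p) -> tmax t1 <= fmax p /\ tmax t2 <= fmax p.
Proof.
elim: p => [a b|a b|q IH|q IHq r IHr|_ q IH] //=.
- by case=> [[<- <-]|[[<- <-]|[]]]; rewrite !leq_max !leqnn ?orbT.
- by case=> [[<- <-]|[[<- <-]|[]]]; rewrite !leq_max !leqnn ?orbT.
- move=> Hin; case: (List.in_app_or _ _ _ Hin) => H.
    by case: (IHq H) => H1 H2; rewrite !leq_max H1 H2.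
  by case: (IHr H) => H1 H2; rewrite !leq_max H1 H2 !orbT.
Qed.

Lemma sat_transfer (M1 M2 : Lstruct) (r1 : nat -> car M1) (r2 : nat -> car M2) p :
  qf p ->
  (forall t1 t2, List.In (t1, t2) (pairs p) ->
     (teval r1 t1 = teval r1 t2 <-> teval r2 t1 = teval r2 t2) /\
     (slt (teval r1 t1) (teval r1 t2) <-> slt (teval r2 t1) (teval r2 t2))) ->
  (sat r1 p <-> sat r2 p).
Proof.
elim: p => [a b|a b|q IH|q IHq r IHr|_ q IH] //=.
- by move=> _ H; case: (H a b); auto.
- by move=> _ H; case: (H a b); auto.
- by move=> Hq H; rewrite IH.
- move=> /andP [Hq Hr] H; rewrite IHq ?IHr //.
    by move=> t1 t2 Hin; apply: H; apply: List.in_or_app; auto.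
  by move=> t1 t2 Hin; apply: H; apply: List.in_or_app; auto.
Qed.

Section Psi.
Variables (bp : term * term -> bool) (Np : term * term -> nat) (m N : nat).
Definition atomf (p : term * term) : formula :=
  if bp p then fLt (tmul N p.1) (tadd (tmul N p.2) (tvar m))
  else fNot (fLt (tmul (Np p) p.1) (tadd (tmul (Np p) p.2) (tvar m))).
Definition psi (ps : list (term * term)) : formula :=
  foldr (fun p acc => fAnd (atomf p) acc) (fEq tzero tzero) ps.
Lemma qf_psi ps : qf (psi ps).
Proof. elim: ps => [|p ps IH] //=; rewrite IH /atomf; by case: (bp p). Qed.
Lemma sat_psi (M : Lstruct) (r : nat -> car M) ps :
  sat r (psi ps) <-> forall p, List.In p ps ->
    (if bp p then smul N (teval r p.1) <<< smul N (teval r p.2) |+| r m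
     else ~ (smul (Np p) (teval r p.1) <<< smul (Np p) (teval r p.2) |+| r m)).
Proof.
elim: ps => [|p ps IH] /=; first by split.
rewrite IH /atomf; split.
  case=> H1 H2 q [<-|Hq]; last exact: H2.
  by move: H1; case: (bp p) => /=; rewrite !teval_tmul.
move=> H; split; last by move=> q Hq; apply: H; right.
by have := H p (or_introl erefl); case: (bp p) => /=; rewrite !teval_tmul.
Qed.
End Psi.

Lemma extend_ge (M : Lstruct) n (c : 'I_n -> car M) r i : n <= i -> extend c r i = r i.
Proof. by move=> H; rewrite /extend insubF // ltnNge H. Qed.
Lemma extend_lt (M : Lstruct) n (c : 'I_n -> car M) r i (H : i < n) : extend c r i = c (Ordinal H).
Proof. by rewrite /extend insubT. Qed.

Section Emb.
Variables (G G' : Lstruct) (HG : OAG G) (HG' : OAG G') (f : car G -> car G').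
Hypothesis Hemb : embedding f.

Lemma f_inj : injective f. Proof. by case: Hemb. Qed.
Lemma f0 : f szero = szero. Proof. by case: Hemb => _ []. Qed.
Lemma fadd x y : f (x |+| y) = f x |+| f y. Proof. by case: Hemb => _ [_ []]. Qed.
Lemma flt x y : x <<< y <-> f x <<< f y. Proof. by case: Hemb => _ [_ [_]]. Qed.
Lemma fle x y : x <<= y <-> f x <<= f y. Proof. by rewrite /sle flt. Qed.
Lemma fopp x : f (opp HG x) = opp HG' (f x).
Proof. apply: opp_uniq; by rewrite -fadd addN f0. Qed.
Lemma fsmul n x : f (smul n x) = smul n (f x).
Proof. elim: n => [|n IH] /=; [exact: f0| by rewrite fadd IH]. Qed.

Lemma f_Echar g0 x : Echar g0 x <-> Echar (f g0) (f x).
Proof.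
split=> H N; have [H1 H2] := H N; split.
- by rewrite -fsmul -flt.
- by rewrite -fsmul -fadd -f0 -flt.
- by rewrite flt fsmul.
- by rewrite flt fadd fsmul f0.
Qed.

Lemma f_Fchar g0 x : Fchar g0 x <-> Fchar (f g0) (f x).
Proof.
split; case=> N [H1 H2]; exists N; split.
- by rewrite -fsmul -fle.
- by rewrite -fsmul -fadd -f0 -fle.
- by rewrite fle fsmul.
- by rewrite fle fadd fsmul f0.
Qed.

Lemma f_Lrel g0 u v : Lrel g0 u v <-> Lrel (f g0) (f u) (f v).
Proof.
split=> H N; have := H N.
- by rewrite flt fadd !fsmul.
- by rewrite flt fadd !fsmul.
Qed.

Lemma f_gam g g0 : (g0 = g \/ g |+| g0 = szero) -> (f g0 = f g \/ f g |+| f g0 = szero).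
Proof. by case=> [->|E]; [left|right; rewrite -fadd E f0]. Qed.

Lemma quot_map (D : car G -> Prop) (D' : car G' -> Prop) :
  convex_subgroup D -> convex_subgroup D' -> (forall x, D' (f x) <-> D x) ->
  exists h : car (quot D) -> car (quot D'),
    (forall g, h (cls D g) = cls D' (f g)) /\ injective h.
Proof.
move=> HD HD' key.
have hcls : forall g, cls D' (f (rep (cls D g))) = cls D' (f g).
  move=> g; have [d [Hd E]] := rep_cls HG HD g.
  by rewrite [in RHS]E fadd (cls_add HG' HD') // key.
exists (fun C => cls D' (f (rep C))); split => //.
move=> C1 C2; have [a ->] := cls_surj C1; have [b ->] := cls_surj C2.
rewrite !hcls => /(cls_eqN HG' HD'); rewrite -fopp -fadd key => H.
by apply/(cls_eqN HG HD).
Qed.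

End Emb.

From Stdlib Require Import Classical.

Lemma part1 (G G' : Lstruct) (f : car G -> car G') (gamma : car G) :
  OAG G -> OAG G' -> ec_embedding f ->
  forall (Dp : car G -> Prop) (Dp' : car G' -> Prop),
      min_convex_containing gamma Dp -> min_convex_containing (f gamma) Dp' ->
      exists h : car (quot Dp) -> car (quot Dp'),
        (forall g, h (cls Dp g) = cls Dp' (f g)) /\
        injective h /\
        (forall (n : nat) (x : car (quot Dp')), 0 < n ->
            (exists y, smul n x = h y) -> exists y, x = h y).
Proof.
move=> HG HG' [Hemb Htr] Dp Dp' H1 H2.
have [g0 [Hg Hpos]] : exists g0, (g0 = gamma \/ gamma |+| g0 = szero) /\ szero <<= g0.
  case: (trich HG gamma szero) => [Hn|Hp].
  - exists (opp HG gamma); split; first by right; apply: addN.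
    apply: (ltW HG); by rewrite -(opp0 HG) -lt_opp.
  - exists gamma; split; first by left.
    by apply/(leP HG); case: Hp => [->|H]; auto.
have Hpos' : szero <<= f g0 by rewrite -(f0 Hemb) -fle.
have cD := min_char HG Hg Hpos H1.
have cD' := min_char HG' (f_gam Hemb Hg) Hpos' H2.
have key : forall x, Dp' (f x) <-> Dp x by move=> x; rewrite cD' cD -f_Fchar.
have cvD := proj1 H1; have cvD' := proj1 H2.
have [h [hcls hinj]] := quot_map HG HG' Hemb cvD cvD' key.
exists h; split => //; split => //.
move=> n x Hn [y Hy].
have [x' Ex] := cls_surj x; have [y0 Ey] := cls_surj y; subst x y.
rewrite hcls (qsmul HG' cvD') in Hy.
have Dx := proj1 (cls_eqN HG' cvD' _ _) Hy.
have := Dx; rewrite cD' Frel => -[N [Hle1 Hle2]].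
pose psi := fAnd (fNot (fLt (tadd (tmul n (tvar 0)) (tmul N (tvar 2))) (tvar 1)))
                 (fNot (fLt (tadd (tvar 1) (tmul N (tvar 2))) (tmul n (tvar 0)))).
pose rho i := if i == 1 then y0 else g0.
have [tau [Htau Hsat]] : exists tau, (forall i, 1 <= i -> tau i = rho i) /\ sat tau psi.
  apply: (Htr psi 1 rho) => //.
  exists (fun i => if i == 0 then x' else f (rho i)); split.
    by move=> [|i].
  rewrite /psi /= !teval_tmul /rho /=; split; [exact: Hle1|exact: Hle2].
move: Hsat; rewrite /psi /= !teval_tmul /= (Htau 1) // (Htau 2) // /rho /= => -[Hz1 Hz2].
have Dz : Dp (y0 |+| opp HG (smul n (tau 0))) by rewrite cD Frel; exists N; split.
have Dz' : Dp' (f y0 |+| opp HG' (smul n (f (tau 0)))) by rewrite -(fsmul Hemb) -(fopp HG HG' Hemb) -(fadd Hemb) key.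
have Hdiff : Dp' (smul n (x' |+| opp HG' (f (tau 0)))).
  have -> : smul n (x' |+| opp HG' (f (tau 0))) =
     (f y0 |+| opp HG' (smul n (f (tau 0)))) |+| opp HG' (f y0 |+| opp HG' (smul n x')).
    by rewrite (smul_add HG') (smul_opp HG') (oppD HG') (oppK HG') (addACA HG') (addN HG') (add0 HG') (addC HG').
  exact: (DB HG' cvD' Dz' Dx).
have := F_pure HG' Hpos' Hn (proj1 (cD' _) Hdiff).
rewrite -cD' -(cls_eqN HG' cvD') => E.
by exists (cls Dp (tau 0)); rewrite hcls E.
Qed.

Lemma part2 (G G' : Lstruct) (f : car G -> car G') (gamma : car G) :
  OAG G -> OAG G' -> ec_embedding f ->
  aleph1_saturated G ->
   forall (D : car G -> Prop) (D' : car G' -> Prop),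
      max_convex_not_containing gamma D -> max_convex_not_containing (f gamma) D' ->
      exists h : car (quot D) -> car (quot D'),
        (forall g, h (cls D g) = cls D' (f g)) /\ ec_embedding h.
Proof.
move=> HG HG' [Hemb Htr] satG D D' H1 H2.
have cvD := proj1 H1; have cvD' := proj1 H2.
have [g0 [Hg Hpos]] : exists g0, (g0 = gamma \/ gamma |+| g0 = szero) /\ szero <<< g0.
  case: (trich HG gamma szero) => [Hn|[E|Hp]].
  - exists (opp HG gamma); split; first by right; apply: addN.
    by rewrite -(opp0 HG) -lt_opp.
  - exfalso; case: H1 => _ [Hng _]; apply: Hng; rewrite E; exact: D0 cvD.
  - by exists gamma; split; first left.
have Hpos' : szero <<< f g0 by rewrite -(f0 Hemb) -(flt Hemb).
have cD := max_char HG Hg Hpos H1.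
have cD' := max_char HG' (f_gam Hemb Hg) Hpos' H2.
have key : forall x, D' (f x) <-> D x by move=> x; rewrite cD' cD -(f_Echar Hemb).
have [h [hcls hinj]] := quot_map HG HG' Hemb cvD cvD' key.
exists h; split => //.
split.
  split => //; split; [|split].
  - change (h (cls D szero) = cls D' szero); by rewrite hcls (f0 Hemb).
  - move=> C1 C2; have [a ->] := cls_surj C1; have [b ->] := cls_surj C2.
    by rewrite (qadd HG cvD) !hcls (qadd HG' cvD') (fadd Hemb).
  - move=> C1 C2; have [a ->] := cls_surj C1; have [b ->] := cls_surj C2.
    by rewrite !hcls (Q2 HG Hpos cD cvD) (Q2 HG' Hpos' cD' cvD') -(f_Lrel Hemb).
move=> phi k rho Hqf [sigma [Hsig Hsat]].
pose a i := rep (rho i).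
have Ha : forall i, rho i = cls D (a i) by move=> i; rewrite /a cls_rep.
pose b i := if i < k then rep (sigma i) else f (a i).
have Hb : forall i, sigma i = cls D' (b i).
  move=> i; rewrite /b; case: ltnP => Hi; first by rewrite cls_rep.
  by rewrite Hsig // Ha hcls.
pose m := k + fmax phi.
have Hm : k <= m by rewrite leq_addr.
have Hlt : forall t i, tmax t <= fmax phi -> i < tmax t -> (i == m) = false.
  move=> t i Ht Hi; apply: ltn_eqF; apply: (leq_trans Hi); apply: (leq_trans Ht).
  by rewrite leq_addl.
pose Lb p := Lrel (f g0) (teval b p.1) (teval b p.2).
pose bp p := if excluded_middle_informative (Lb p) then true else false.
have Hbp : forall p, bp p = true <-> Lb p.
  by move=> p; rewrite /bp; case: excluded_middle_informative.
pose Np p := epsilon (inhabits 0)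
   (fun N => ~ (smul N (teval b p.1) <<< smul N (teval b p.2) |+| f g0)).
have HNp : forall p, ~ Lb p ->
    ~ (smul (Np p) (teval b p.1) <<< smul (Np p) (teval b p.2) |+| f g0).
  move=> p HL; apply: (epsilon_spec (inhabits 0)
     (fun N => ~ (smul N (teval b p.1) <<< smul N (teval b p.2) |+| f g0))).
  exact: not_all_ex_not.
pose rhoG i := if i == m then g0 else a i.
pose X N (c : 'I_k -> car G) := sat (extend c rhoG) (psi bp Np m N (pairs phi)).
have Hext_m : forall c : 'I_k -> car G, extend c rhoG m = g0.
  by move=> c; rewrite extend_ge // /rhoG eqxx.
have [c Hc] : exists c, forall N, X N c.
  apply: satG.
  - move=> N; exists (psi bp Np m N (pairs phi)), rhoG => c'; by [].
  - move=> N c'; rewrite /X !sat_psi => H p Hp; have := H p Hp; rewrite Hext_m.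
    case: (bp p) => // H'; exact: (Lrel_mono HG Hpos H').
  - move=> N.
    have [tau [Htau Hs]] : exists tau, (forall i, k <= i -> tau i = rhoG i) /\
        sat tau (psi bp Np m N (pairs phi)).
      apply: Htr; first exact: qf_psi.
      exists (fun i => if i == m then f g0 else b i); split.
        move=> i Hi; rewrite /rhoG; case: (i == m) => //.
        by rewrite /b ltnNge Hi.
      apply/sat_psi => -[t1 t2] Hp.
      have [B1 B2] := pairs_bound Hp.
      have E : forall t, tmax t <= fmax phi ->
          teval (fun i => if i == m then f g0 else b i) t = teval b t.
        move=> t Ht; apply: teval_ext => i Hi; by rewrite (Hlt t i Ht Hi).
      rewrite /= !E // eqxx.
      case E2 : (bp (t1, t2)).
        by move/Hbp: E2 => /(_ N).
      by apply: HNp => /Hbp; rewrite E2.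
    exists (fun j : 'I_k => tau j).
    rewrite /X; suff -> : extend (fun j : 'I_k => tau j) rhoG = tau by [].
    apply: functional_extensionality => i; case: (ltnP i k) => Hi.
      by rewrite (extend_lt _ _ Hi).
    by rewrite extend_ge // Htau.
pose e := extend c rhoG.
have Hpair : forall t1 t2, List.In (t1, t2) (pairs phi) ->
    (Lrel g0 (teval e t1) (teval e t2) <-> Lrel (f g0) (teval b t1) (teval b t2)).
  move=> t1 t2 Hp; split.
  - move=> HL; apply: NNPP => HnL.
    have := Hc 0; rewrite /X sat_psi => /(_ _ Hp).
    case E2 : (bp (t1, t2)); first by move/Hbp: E2.
    rewrite Hext_m; apply; exact: HL.
  - move=> HL N; have := Hc N; rewrite /X sat_psi => /(_ _ Hp).
    have -> : bp (t1, t2) = true by apply/Hbp.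
    by rewrite Hext_m.
pose tau : nat -> car (quot D) := fun i => if i < k then cls D (e i) else rho i.
exists tau; split.
  by move=> i Hi; rewrite /tau ltnNge Hi.
suff HH : forall t1 t2, List.In (t1, t2) (pairs phi) ->
     (teval tau t1 = teval tau t2 <-> teval sigma t1 = teval sigma t2) /\
     (slt (teval tau t1) (teval tau t2) <-> slt (teval sigma t1) (teval sigma t2)).
  exact: (proj2 (sat_transfer Hqf HH) Hsat).
move=> t1 t2 Hp.
have [B1 B2] := pairs_bound Hp.
have Etau : forall t, tmax t <= fmax phi -> teval tau t = cls D (teval e t).
  move=> t Ht; apply: (qteval HG cvD) => i Hi; rewrite /tau; case: ltnP => Hik //.
  by rewrite Ha /e extend_ge // /rhoG (Hlt t i Ht Hi).
have Esig : forall t, teval sigma t = cls D' (teval b t).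
  by move=> t; apply: (qteval HG' cvD') => i _; apply: Hb.
rewrite !Etau // !Esig; split.
  rewrite (Q1 HG cD cvD) (Q1 HG' cD' cvD').
  by rewrite (Hpair t1 t2 Hp) (Hpair t2 t1 (pairs_sym Hp)).
by rewrite (Q2 HG Hpos cD cvD) (Q2 HG' Hpos' cD' cvD') (Hpair t2 t1 (pairs_sym Hp)).
Qed.

Theorem lemma2p11 (G G' : Lstruct) (f : car G -> car G') (gamma : car G) :
  OAG G -> OAG G' -> ec_embedding f ->
  (forall (Dp : car G -> Prop) (Dp' : car G' -> Prop),
      min_convex_containing gamma Dp -> min_convex_containing (f gamma) Dp' ->
      exists h : car (quot Dp) -> car (quot Dp'),
        (forall g, h (cls Dp g) = cls Dp' (f g)) /\
        injective h /\
        (forall (n : nat) (x : car (quot Dp')), 0 < n ->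
            (exists y, smul n x = h y) -> exists y, x = h y))
  /\
  (aleph1_saturated G ->
   forall (D : car G -> Prop) (D' : car G' -> Prop),
      max_convex_not_containing gamma D -> max_convex_not_containing (f gamma) D' ->
      exists h : car (quot D) -> car (quot D'),
        (forall g, h (cls D g) = cls D' (f g)) /\ ec_embedding h).
Proof.
move=> HG HG' Hf; split; [exact: part1 | exact: part2].
Qed.
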